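(* The category $\mathsf{SRng}$ of semirings is $S$-fibrewise algebraically cartesian closed, where $S$ is the class of Schreier split epimorphisms: for every split epimorphism $h\colon E\to B$ in $\mathsf{SRng}$, the change-of-base functor $h^*\colon SPt_B(\mathsf{SRng})\to SPt_E(\mathsf{SRng})$ has a right adjoint.
   Context: A semiring is a set with a commutative monoid structure $(+,0)$ and an associative (not necessarily unital) multiplication distributing over $+$ on both sides, with $0x=x0=0$. A point is a split epimorphism $f\colon A\to B$ with chosen section $s$; $Pt_B$ is the category of points over $B$; for $h\colon E\to B$, $h^*$ pulls points back along $h$. A split epimorphism $(A,B,f,s)$ of semirings is Schreier if each $a\in A$ can be written uniquely as $a=\alpha+sf(a)$ with $f(\alpha)=0$. $SPt_B(\mathsf{SRng})$ is the full subcategory of $Pt_B(\mathsf{SRng})$ of Schreier points. *)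

(* Defs.v *)
From Stdlib Require Import ProofIrrelevance.

Set Implicit Arguments.

Record semiring := Semiring {
  car :> Type;
  sadd : car -> car -> car;
  szero : car;
  smul : car -> car -> car;
  saddA : forall x y z, sadd x (sadd y z) = sadd (sadd x y) z;
  saddC : forall x y, sadd x y = sadd y x;
  sadd0 : forall x, sadd szero x = x;
  smulA : forall x y z, smul x (smul y z) = smul (smul x y) z;
  smulDl : forall x y z, smul (sadd x y) z = sadd (smul x z) (smul y z);
  smulDr : forall x y z, smul x (sadd y z) = sadd (smul x y) (smul x z);
  smul0l : forall x, smul szero x = szero;
  smul0r : forall x, smul x szero = szero
}.

Arguments sadd {s}. Arguments szero {s}. Arguments smul {s}.

Record hom (A B : semiring) := Hom {
  hfun :> A -> B;
  hadd : forall x y, hfun (sadd x y) = sadd (hfun x) (hfun y);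
  hzero : hfun szero = szero;
  hmul : forall x y, hfun (smul x y) = smul (hfun x) (hfun y)
}.

Record point (B : semiring) := Point {
  pA : semiring;
  pf : hom pA B;
  ps : hom B pA;
  psec : forall b, pf (ps b) = b
}.

Definition schreier (B : semiring) (P : point B) : Prop :=
  forall a : pA P, exists! alpha : pA P,
    pf P alpha = szero /\ a = sadd alpha (ps P (pf P a)).

Record ptmor (B : semiring) (P Q : point B) := PtMor {
  pm :> hom (pA P) (pA Q);
  pm_f : forall a, pf Q (pm a) = pf P a;
  pm_s : forall b, pm (ps P b) = ps Q b
}.

Section Pullback.
Variables (E B : semiring) (h : hom E B) (P : point B).

Definition pb_car : Type := { p : E * pA P | h (fst p) = pf P (snd p) }.

Lemma pb_sig_eq (x y : pb_car) : proj1_sig x = proj1_sig y -> x = y.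
Proof.
  destruct x as [x hx], y as [y hy]; simpl; intros ->.
  f_equal; apply proof_irrelevance.
Qed.

Definition pb_add (x y : pb_car) : pb_car.
Proof.
  refine (exist _ (sadd (fst (proj1_sig x)) (fst (proj1_sig y)),
                   sadd (snd (proj1_sig x)) (snd (proj1_sig y))) _).
  destruct x as [[e a] hx], y as [[e' a'] hy]; simpl in *.
  rewrite hadd, hadd, hx, hy; reflexivity.
Defined.

Definition pb_mul (x y : pb_car) : pb_car.
Proof.
  refine (exist _ (smul (fst (proj1_sig x)) (fst (proj1_sig y)),
                   smul (snd (proj1_sig x)) (snd (proj1_sig y))) _).
  destruct x as [[e a] hx], y as [[e' a'] hy]; simpl in *.
  rewrite hmul, hmul, hx, hy; reflexivity.
Defined.

Definition pb_zero : pb_car.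
Proof.
  refine (exist _ (szero, szero) _); simpl; rewrite hzero, hzero; reflexivity.
Defined.

Definition pb_semiring : semiring.
Proof.
  refine (@Semiring pb_car pb_add pb_zero pb_mul _ _ _ _ _ _ _ _);
  intros; apply pb_sig_eq; simpl;
  repeat match goal with x : pb_car |- _ => destruct x as [[? ?] ?] end; simpl;
  f_equal; auto using saddA, saddC, sadd0, smulA, smulDl, smulDr, smul0l, smul0r.
Defined.

Definition pb_proj : hom pb_semiring E.
Proof.
  refine (@Hom pb_semiring E (fun x => fst (proj1_sig x)) _ _ _); reflexivity.
Defined.

Definition pb_sec_fun (e : E) : pb_semiring.
Proof.
  refine (exist _ (e, ps P (h e)) _); simpl; rewrite psec; reflexivity.
Defined.

Definition pb_sec : hom E pb_semiring.
Proof.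
  refine (@Hom E pb_semiring pb_sec_fun _ _ _); intros; apply pb_sig_eq; simpl;
  rewrite ?hadd, ?hzero, ?hmul; reflexivity.
Defined.

Definition pullback : point E := @Point E pb_semiring pb_proj pb_sec (fun e => eq_refl).

End Pullback.

Section PullbackMor.
Variables (E B : semiring) (h : hom E B) (P Q : point B) (g : ptmor P Q).

Definition pbm_fun (x : pb_car h P) : pb_car h Q.
Proof.
  refine (exist _ (fst (proj1_sig x), g (snd (proj1_sig x))) _).
  destruct x as [[e a] hx]; simpl; rewrite pm_f; exact hx.
Defined.

Definition pbm_hom : hom (pA (pullback h P)) (pA (pullback h Q)).
Proof.
  refine (@Hom (pA (pullback h P)) (pA (pullback h Q)) pbm_fun _ _ _);
  intros; apply pb_sig_eq; simpl; rewrite ?hadd, ?hzero, ?hmul; reflexivity.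
Defined.

Definition pullback_mor : ptmor (pullback h P) (pullback h Q).
Proof.
  refine (@PtMor _ (pullback h P) (pullback h Q) pbm_hom _ _).
  - intros; reflexivity.
  - intros e; apply pb_sig_eq; simpl; rewrite pm_s; reflexivity.
Defined.

End PullbackMor.

(** h^* : SPt_B -> SPt_E has a right adjoint, stated via universal arrows
    (couniversal arrows from h^* to each object D of SPt_E): for each Schreier
    point D over E there is a Schreier point G over B and a counit
    eps : h^*(G) -> D such that every morphism f : h^*(C) -> D with C Schreier
    factors as eps o h^*(g) for a unique g : C -> G.  Morphisms are compared
    pointwise. *)
Definition has_right_adjoint_S (E B : semiring) (h : hom E B) : Prop :=
  forall D : point E, schreier D ->
  exists (G : point B) (HG : schreier G) (eps : ptmor (pullback h G) D),
    forall (C : point B), schreier C ->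
    forall f : ptmor (pullback h C) D,
      exists g : ptmor C G,
        (forall x, eps (pullback_mor h g x) = f x) /\
        (forall g' : ptmor C G,
           (forall x, eps (pullback_mor h g' x) = f x) ->
           forall a, g' a = g a).

(* Main.v *)
Require Import Defs.
From Stdlib Require Import ProofIrrelevance IndefiniteDescription.
Set Implicit Arguments.

Lemma sigE {T : Type} {P : T -> Prop} (x y : {t | P t}) :
  proj1_sig x = proj1_sig y -> x = y.
Proof. destruct x, y; simpl; intros ->; f_equal; apply proof_irrelevance. Qed.

Lemma add0r (S : semiring) (x : S) : sadd x szero = x.
Proof. rewrite saddC; apply sadd0. Qed.

Lemma addACA (S : semiring) (a b c d : S) :
  sadd (sadd a b) (sadd c d) = sadd (sadd a c) (sadd b d).
Proof.
  rewrite <- !saddA; f_equal; rewrite !saddA; f_equal; apply saddC.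
Qed.

Section Kp.
Variables (E : semiring) (D : point E) (HD : schreier D).

Definition kp_sig (d : pA D) := constructive_indefinite_description _ (HD d).
Definition kp (d : pA D) : pA D := proj1_sig (kp_sig d).

Lemma kp_spec d : pf D (kp d) = szero /\ d = sadd (kp d) (ps D (pf D d)).
Proof. unfold kp; exact (proj1 (proj2_sig (kp_sig d))). Qed.

Lemma kp_uniq d a : pf D a = szero -> d = sadd a (ps D (pf D d)) -> a = kp d.
Proof.
  intros H1 H2; unfold kp; symmetry; apply (proj2 (proj2_sig (kp_sig d))); auto.
Qed.

Lemma kp_f d : pf D (kp d) = szero. Proof. apply kp_spec. Qed.
Lemma kp_d d : d = sadd (kp d) (ps D (pf D d)). Proof. apply kp_spec. Qed.

Lemma kp_add d d' : kp (sadd d d') = sadd (kp d) (kp d').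
Proof.
  symmetry; apply kp_uniq.
  - rewrite hadd, !kp_f; apply sadd0.
  - rewrite (hadd (pf D)), (hadd (ps D)), <- addACA, <- !kp_d; reflexivity.
Qed.

Lemma kp_s x : kp (ps D x) = szero.
Proof.
  symmetry; apply kp_uniq.
  - apply hzero.
  - rewrite psec, sadd0; reflexivity.
Qed.

Lemma kp_zero : kp szero = szero.
Proof. pose proof (kp_s szero) as H; rewrite hzero in H; exact H. Qed.

Lemma kp_kp d : kp (kp d) = kp d.
Proof.
  symmetry; apply kp_uniq. apply kp_f.
  rewrite kp_f, hzero, add0r; reflexivity.
Qed.

Lemma kp_mul d d' : kp (smul d d') =
  sadd (sadd (smul (kp d) (kp d')) (smul (kp d) (ps D (pf D d'))))
       (smul (ps D (pf D d)) (kp d')).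
Proof.
  symmetry; apply kp_uniq.
  - rewrite !hadd, !hmul, !kp_f, !psec; repeat rewrite ?smul0l, ?smul0r, ?sadd0; reflexivity.
  - rewrite (hmul (pf D)), (hmul (ps D)).
    transitivity (smul (sadd (kp d) (ps D (pf D d))) (sadd (kp d') (ps D (pf D d')))).
    + rewrite <- !kp_d; reflexivity.
    + rewrite smulDl, !smulDr, saddA; reflexivity.
Qed.
End Kp.

Section Adj.
Variables (E B : semiring) (h : hom E B) (k : hom B E) (hk : forall b, h (k b) = b).
Variables (D : point E) (HD : schreier D).

Definition Inv (a : pA D) : Prop := forall e e', h e = h e' ->
  smul (ps D e) a = smul (ps D e') a /\ smul a (ps D e) = smul a (ps D e').

Definition PG (d : pA D) : Prop := pf D d = k (h (pf D d)) /\ Inv (kp HD d).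

Lemma Inv0 : Inv szero.
Proof. intros e e' _; rewrite !smul0r, !smul0l; auto. Qed.

Lemma InvD a b : Inv a -> Inv b -> Inv (sadd a b).
Proof.
  intros Ha Hb e e' He; destruct (Ha e e' He), (Hb e e' He).
  rewrite !smulDr, !smulDl; split; congruence.
Qed.

Lemma InvMl a y : Inv a -> Inv y -> Inv (smul a y).
Proof.
  intros Ha Hy e e' He; destruct (Ha e e' He), (Hy e e' He).
  rewrite !smulA; split; [congruence|]. rewrite <- !smulA; congruence.
Qed.

Lemma InvMs a x : Inv a -> Inv (smul a (ps D x)).
Proof.
  intros Ha e e' He; destruct (Ha e e' He).
  rewrite !smulA; split; [congruence|]. rewrite <- !smulA, <- !hmul.
  destruct (Ha (smul x e) (smul x e')) as [_ H2]; [rewrite !hmul, He; reflexivity|].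
  exact H2.
Qed.

Lemma InvsM a x : Inv a -> Inv (smul (ps D x) a).
Proof.
  intros Ha e e' He; destruct (Ha e e' He).
  rewrite <- !smulA; split; [|congruence]. rewrite !smulA, <- !hmul.
  destruct (Ha (smul e x) (smul e' x)) as [H2 _]; [rewrite !hmul, He; reflexivity|].
  exact H2.
Qed.

Lemma PG0 : PG szero.
Proof. split; [rewrite !hzero; reflexivity| rewrite kp_zero; apply Inv0]. Qed.

Lemma PGD a b : PG a -> PG b -> PG (sadd a b).
Proof.
  intros [Ha Ia] [Hb Ib]; split.
  - rewrite !hadd, <- Ha, <- Hb; reflexivity.
  - rewrite kp_add; apply InvD; auto.
Qed.

Lemma PGM a b : PG a -> PG b -> PG (smul a b).
Proof.
  intros [Ha Ia] [Hb Ib]; split.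
  - rewrite !hmul, <- Ha, <- Hb; reflexivity.
  - rewrite kp_mul; repeat apply InvD; auto using InvMl, InvMs, InvsM.
Qed.

Definition Gcar := { d : pA D | PG d }.
Definition Gadd (x y : Gcar) : Gcar :=
  exist _ (sadd (proj1_sig x) (proj1_sig y)) (PGD (proj2_sig x) (proj2_sig y)).
Definition Gmul (x y : Gcar) : Gcar :=
  exist _ (smul (proj1_sig x) (proj1_sig y)) (PGM (proj2_sig x) (proj2_sig y)).
Definition Gzero : Gcar := exist _ szero PG0.

Definition Gsr : semiring.
Proof.
  refine (@Semiring Gcar Gadd Gzero Gmul _ _ _ _ _ _ _ _); intros; apply sigE; simpl;
  auto using saddA, saddC, sadd0, smulA, smulDl, smulDr, smul0l, smul0r.
Defined.

Definition Gf : hom Gsr B.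
Proof.
  refine (@Hom Gsr B (fun g => h (pf D (proj1_sig g))) _ _ _); intros; simpl;
  rewrite ?hadd, ?hzero, ?hmul, ?hadd, ?hzero, ?hmul; reflexivity.
Defined.

Lemma PGs b : PG (ps D (k b)).
Proof.
  split; [rewrite !psec, hk; reflexivity| rewrite kp_s; apply Inv0].
Qed.

Definition Gs : hom B Gsr.
Proof.
  refine (@Hom B Gsr (fun b => exist _ (ps D (k b)) (PGs b)) _ _ _); intros; apply sigE; simpl;
  rewrite ?hadd, ?hzero, ?hmul, ?hadd, ?hzero, ?hmul; reflexivity.
Defined.

Definition G : point B.
Proof.
  refine (@Point B Gsr Gf Gs _); intros b; simpl; rewrite psec; apply hk.
Defined.

Lemma PGkp d : PG d -> PG (kp HD d).
Proof.
  intros [_ I]; split; [rewrite kp_f, !hzero; reflexivity| rewrite kp_kp; exact I].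
Qed.

Lemma G_schreier : schreier G.
Proof.
  intros g. destruct g as [d Hd].
  exists (exist _ (kp HD d) (PGkp Hd)). split.
  - simpl. split.
    + rewrite kp_f, hzero; reflexivity.
    + apply sigE; simpl. rewrite <- (proj1 Hd). apply kp_d.
  - intros [a Ha] [H1 H2]. apply sigE; simpl in *.
    apply (f_equal (@proj1_sig _ _)) in H2; simpl in H2.
    symmetry; apply kp_uniq.
    + rewrite (proj1 Ha), H1, hzero; reflexivity.
    + rewrite <- (proj1 Hd) in H2; exact H2.
Qed.

Definition eps_fun (x : pA (pullback h G)) : pA D :=
  sadd (kp HD (proj1_sig (snd (proj1_sig x)))) (ps D (fst (proj1_sig x))).

Definition eps_hom : hom (pA (pullback h G)) (pA D).
Proof.
  refine (@Hom _ _ eps_fun _ _ _).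
  - intros [[e [g Hg]] hx] [[e' [g' Hg']] hx']; unfold eps_fun; simpl.
    rewrite kp_add, hadd; apply addACA.
  - unfold eps_fun; simpl. rewrite kp_zero, hzero; apply sadd0.
  - intros [[e [g Hg]] hx] [[e' [g' Hg']] hx']; unfold eps_fun; simpl in *.
    rewrite kp_mul, hmul, smulDl, !smulDr.
    destruct Hg as [_ Ig], Hg' as [_ Ig'].
    destruct (Ig (pf D g') e') as [_ E1]; [symmetry; exact hx'|].
    destruct (Ig' (pf D g) e) as [E2 _]; [symmetry; exact hx|].
    rewrite E1, E2, saddA; reflexivity.
Defined.

Definition eps : ptmor (pullback h G) D.
Proof.
  refine (@PtMor _ (pullback h G) D eps_hom _ _).
  - intros [[e [g Hg]] hx]; simpl; unfold eps_fun; simpl.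
    rewrite hadd, kp_f, psec; apply sadd0.
  - intros e; simpl; unfold eps_fun; simpl. rewrite kp_s; apply sadd0.
Defined.

Section Univ.
Variables (C : point B) (HC : schreier C) (F : ptmor (pullback h C) D).

Definition xc (c : pA C) : pb_car h C.
Proof. refine (exist _ (k (pf C c), c) _); simpl; apply hk. Defined.

Definition x0 (a : pA C) (Ha : pf C a = szero) : pb_car h C.
Proof. refine (exist _ (szero, a) _); simpl; rewrite Ha; apply hzero. Defined.

Lemma Inv_F a Ha : Inv (F (@x0 a Ha)).
Proof.
  intros e e' He.
  rewrite <- !(pm_s F), <- !(hmul F). split; f_equal; apply pb_sig_eq; simpl;
  rewrite He, ?smul0r, ?smul0l; reflexivity.
Qed.

Lemma decompF (c : pA C) a (Ha : pf C a = szero) (Hc : c = sadd a (ps C (pf C c))) e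
  (he : h e = pf C c) :
  F (exist (fun p : E * pA C => h (fst p) = pf C (snd p)) (e, c) he)
  = sadd (F (@x0 a Ha)) (ps D e).
Proof.
  rewrite <- (pm_s F), <- (hadd F). f_equal. apply pb_sig_eq; simpl.
  rewrite sadd0, he, <- Hc; reflexivity.
Qed.

Lemma kp_gF c a (Ha : pf C a = szero) (Hc : c = sadd a (ps C (pf C c))) :
  kp HD (F (xc c)) = F (@x0 a Ha).
Proof.
  symmetry; apply kp_uniq.
  - rewrite (pm_f F); reflexivity.
  - rewrite (pm_f F); simpl. apply decompF; auto.
Qed.

Lemma PGg c : PG (F (xc c)).
Proof.
  split.
  - rewrite (pm_f F); simpl; rewrite hk; reflexivity.
  - destruct (HC c) as [a [[Ha Hc] _]]. rewrite (@kp_gF c a Ha Hc). apply Inv_F.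
Qed.

Definition g_hom : hom (pA C) Gsr.
Proof.
  refine (@Hom (pA C) Gsr (fun c => exist _ (F (xc c)) (PGg c)) _ _ _);
  intros; apply sigE; simpl.
  - rewrite <- (hadd F); f_equal; apply pb_sig_eq; simpl; rewrite !hadd; reflexivity.
  - rewrite <- (hzero F); f_equal; apply pb_sig_eq; simpl; rewrite !hzero; reflexivity.
  - rewrite <- (hmul F); f_equal; apply pb_sig_eq; simpl; rewrite !hmul; reflexivity.
Defined.

Definition g_pt : ptmor C G.
Proof.
  refine (@PtMor _ C G g_hom _ _).
  - intros c; simpl. rewrite (pm_f F); simpl; apply hk.
  - intros b; apply sigE; simpl. rewrite <- (pm_s F). f_equal.
    apply pb_sig_eq; simpl. rewrite psec, hk; reflexivity.
Defined.

Lemma g_comm : forall x, eps (pullback_mor h g_pt x) = F x.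
Proof.
  intros [[e c] hx]. simpl; unfold eps_fun; simpl.
  destruct (HC c) as [a [[Ha Hc] _]].
  change (sadd (kp HD (F (xc c))) (ps D e) = F (exist _ (e, c) hx)).
  rewrite (@kp_gF c a Ha Hc).
  symmetry; apply decompF; auto.
Qed.

Lemma g_uniq : forall g' : ptmor C G,
  (forall x, eps (pullback_mor h g' x) = F x) -> forall a, g' a = g_pt a.
Proof.
  intros g' Hg' a. apply sigE. simpl.
  specialize (Hg' (xc a)). simpl in Hg'; unfold eps_fun in Hg'; simpl in Hg'.
  etransitivity; [|exact Hg'].
  pose proof (pm_f g' a) as Hf.
  pose proof (proj2_sig (g' a)) as Hd. simpl in Hf.
  rewrite <- Hf.
  assert (Hd1 : pf D (proj1_sig (g' a)) = k (h (pf D (proj1_sig (g' a))))) by exact (proj1 Hd).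
  etransitivity; [apply (kp_d HD)|]. f_equal. f_equal. exact Hd1.
Qed.
End Univ.
End Adj.

Theorem mainTheorem4 (E B : semiring) (h : hom E B)
  (hsplit : exists k : hom B E, forall b, h (k b) = b) :
  has_right_adjoint_S h.
Proof.
  destruct hsplit as [k hk]. intros D HD.
  exists (@G E B h k hk D HD), (@G_schreier E B h k hk D HD), (@eps E B h k hk D HD).
  intros C HC F. exists (@g_pt E B h k hk D HD C HC F). split.
  - apply g_comm.
  - apply g_uniq.
Qed.
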